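(* Let $q>0$, let $a:[0,\infty)\to[0,\infty)$ be continuous and let $r:[0,\infty)\to[0,q]$ be continuous. Let $\varphi\in C([-q,0],\mathbb R)$, let $x=x(\varphi)$ be the solution on $[-q,\infty)$ of $$x'(t)=-a(t)x(t-r(t)),\ t\ge0,\qquad x(t)=\varphi(t),\ -q\le t\le 0,$$ and for every integer $k\ge1$ and $h=q/k$ let $z_h=z_h(\varphi)$ be the solution of $$z_h'(t)=-a(t)\,z_h\big((i-k_i)h\big)\ \ (t\in[ih,(i+1)h),\ i\ge0),\qquad z_h(nh)=\varphi(nh),\ n=-k,\dots,0.$$ Then for every $T>0$ and every such $h$, $$\max_{0\le t\le T}|x(t)-z_h(t)|\le e^{\int_0^T a(s)ds}\Big(\int_0^T a(s)\,ds\Big)\,w_x\big(w_r(h;T)+2h;T\big),$$ and consequently $\lim_{h\to0}\max_{0\le t\le T}|x(t)-z_h(t)|=0$ for every $T>0$ (limit along $h=q/k$, $k\to\infty$).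
   Context: Here $k_i:=\lfloor r(ih)/h\rfloor$ for $i\ge0$; a solution $z_h$ is a function defined on the grid points $\{nh:n=-k,\dots,0\}$ and on $[0,\infty)$, continuous on $[0,\infty)$, differentiable except possibly at the points $ih$ (where finite one-sided derivatives exist), and satisfying the equation on each $[ih,(i+1)h)$. The moduli of continuity are $w_r(h;T)=\max\{|r(t_2)-r(t_1)|:\ 0\le t_1,t_2\le T,\ |t_2-t_1|\le h\}$ and $w_x(\delta;T)=\max\{|x(t_2)-x(t_1)|:\ -q\le t_1,t_2\le T,\ |t_2-t_1|\le \delta\}$. *)

(* Defs.v *)
From Stdlib Require Import Reals Lra ClassicalEpsilon.
Open Scope R_scope.

Definition continuous_on (f : R -> R) (D : R -> Prop) : Prop :=
  forall t, D t -> forall eps, 0 < eps -> exists d, 0 < d /\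
    forall s, D s -> Rabs (s - t) < d -> Rabs (f s - f t) < eps.

Definition rderiv (f : R -> R) (t l : R) : Prop :=
  forall eps, 0 < eps -> exists d, 0 < d /\
    forall e, 0 < e < d -> Rabs ((f (t + e) - f t) / e - l) < eps.

Definition lub_of (S : R -> Prop) : R := epsilon (inhabits 0) (fun m => is_lub S m).

Definition sup_on (f : R -> R) (lo hi : R) : R :=
  lub_of (fun y => exists t, lo <= t <= hi /\ y = f t).

Definition modulus (f : R -> R) (lo T d : R) : R :=
  lub_of (fun y => exists t1 t2, lo <= t1 <= T /\ lo <= t2 <= T /\
            Rabs (t2 - t1) <= d /\ y = Rabs (f t2 - f t1)).

Definition integral (f : R -> R) (lo hi : R) : R :=
  epsilon (inhabits 0)
    (fun I => exists pr : Riemann_integrable f lo hi, RiemannInt pr = I).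

Definition is_solution_x (q : R) (a r phi x : R -> R) : Prop :=
  (forall t, -q <= t <= 0 -> x t = phi t) /\
  continuous_on x (fun t => -q <= t) /\
  (forall t, 0 < t -> derivable_pt_lim x t (- a t * x (t - r t))) /\
  rderiv x 0 (- a 0 * x (0 - r 0)).

Definition kidx (r : R -> R) (h : R) (i : nat) : R :=
  IZR (Int_part (r (INR i * h) / h)).

Definition is_solution_z (q : R) (a r phi : R -> R) (k : nat) (z : R -> R) : Prop :=
  let h := q / INR k in
  (forall n : nat, (n <= k)%nat -> z (- INR n * h) = phi (- INR n * h)) /\
  continuous_on z (fun t => 0 <= t) /\
  (forall (i : nat) t, INR i * h < t < (INR i + 1) * h ->
      derivable_pt_lim z t (- a t * z ((INR i - kidx r h i) * h))) /\
  (forall i : nat,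
      rderiv z (INR i * h) (- a (INR i * h) * z ((INR i - kidx r h i) * h))).

(* Main.v *)
From Pilot Require Import Defs.
From Stdlib Require Import Reals Lra Lia ZArith ClassicalEpsilon.
From Coquelicot Require Import Coquelicot.
Import Pilot.Defs.
Open Scope R_scope.

Definition clamp (lo hi t : R) := Rmax lo (Rmin t hi).

Lemma clamp_in lo hi t : lo <= hi -> lo <= clamp lo hi t <= hi.
Proof. intros; unfold clamp, Rmax, Rmin; repeat destruct Rle_dec; lra. Qed.

Lemma clamp_id lo hi t : lo <= t <= hi -> clamp lo hi t = t.
Proof. intros; unfold clamp, Rmax, Rmin; repeat destruct Rle_dec; lra. Qed.

Lemma clamp_lip lo hi s t : lo <= hi -> Rabs (clamp lo hi s - clamp lo hi t) <= Rabs (s - t).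
Proof.
  intros; unfold clamp, Rmax, Rmin; repeat destruct Rle_dec;
  unfold Rabs; repeat destruct Rcase_abs; lra.
Qed.

Lemma cont_on_sub (f : R -> R) (D D' : R -> Prop) : continuous_on f D -> (forall t, D' t -> D t) -> continuous_on f D'.
Proof.
  intros H HD t Dt eps He. destruct (H t (HD t Dt) eps He) as [d [Hd H']].
  exists d; split; auto.
Qed.

Lemma clamp_cont f lo hi : lo <= hi -> continuous_on f (fun t => lo <= t <= hi) ->
  forall c, continuity_pt (fun t => f (clamp lo hi t)) c.
Proof.
  intros Hlh H c. unfold continuity_pt, continue_in, limit1_in, limit_in.
  intros eps He. destruct (H (clamp lo hi c) (clamp_in lo hi c Hlh) eps He) as [d [Hd H']].
  exists d; split; auto. intros s [_ Hs]. simpl in *. unfold R_dist in *.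
  apply H'. apply clamp_in; auto.
  eapply Rle_lt_trans. apply clamp_lip; auto. auto.
Qed.

Lemma cont_pt_on (f : R -> R) (D : R -> Prop) : (forall c, continuity_pt f c) -> continuous_on f D.
Proof.
  intros H t _ eps He. specialize (H t eps He). destruct H as [d [Hd H']].
  exists d; split; auto. intros s _ Hs.
  destruct (Req_dec s t). subst. rewrite Rminus_eq_0, Rabs_R0; auto.
  apply (H' s). split. split. exact I. auto. exact Hs.
Qed.

Lemma cont_on_minus (f g : R -> R) (D : R -> Prop) : continuous_on f D -> continuous_on g D -> continuous_on (fun t => f t - g t) D.
Proof.
  intros Hf Hg t Dt eps He.
  destruct (Hf t Dt (eps/2)) as [d1 [Hd1 H1]]. lra.
  destruct (Hg t Dt (eps/2)) as [d2 [Hd2 H2]]. lra.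
  exists (Rmin d1 d2); split. apply Rmin_pos; auto.
  intros s Ds Hs. assert (A1 := H1 s Ds (Rlt_le_trans _ _ _ Hs (Rmin_l _ _))).
  assert (A2 := H2 s Ds (Rlt_le_trans _ _ _ Hs (Rmin_r _ _))).
  replace (f s - g s - (f t - g t)) with ((f s - f t) - (g s - g t)) by ring.
  eapply Rle_lt_trans. apply Rabs_triang. rewrite Rabs_Ropp. lra.
Qed.

Lemma cont_on_opp (f : R -> R) (D : R -> Prop) : continuous_on f D -> continuous_on (fun t => - f t) D.
Proof.
  intros Hf t Dt eps He. destruct (Hf t Dt eps He) as [d [Hd H]].
  exists d; split; auto. intros s Ds Hs.
  replace (- f s - - f t) with (- (f s - f t)) by ring. rewrite Rabs_Ropp; auto.
Qed.

Lemma cont_on_abs (f : R -> R) (D : R -> Prop) : continuous_on f D -> continuous_on (fun t => Rabs (f t)) D.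
Proof.
  intros Hf t Dt eps He. destruct (Hf t Dt eps He) as [d [Hd H]].
  exists d; split; auto. intros s Ds Hs.
  eapply Rle_lt_trans. apply Rabs_triang_inv2. auto.
Qed.

Lemma bounded_on f lo hi : lo <= hi -> continuous_on f (fun t => lo <= t <= hi) ->
  exists M, forall t, lo <= t <= hi -> Rabs (f t) <= M.
Proof.
  intros Hlh H. assert (H2 := cont_on_abs _ _ H).
  destruct (continuity_ab_maj _ lo hi Hlh (fun c _ => clamp_cont _ _ _ Hlh H2 c)) as [m [Hm _]].
  exists (Rabs (f (clamp lo hi m))). intros t Ht. specialize (Hm t Ht).
  rewrite clamp_id in Hm; auto.
Qed.

Lemma unif_on f lo hi : lo <= hi -> continuous_on f (fun t => lo <= t <= hi) ->
  forall eps, 0 < eps -> exists d, 0 < d /\ forall s t, lo <= s <= hi -> lo <= t <= hi ->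
   Rabs (s - t) < d -> Rabs (f s - f t) < eps.
Proof.
  intros Hlh H eps He.
  destruct (Heine _ _ (compact_P3 lo hi) (fun c _ => clamp_cont _ _ _ Hlh H c) (mkposreal eps He)) as [d Hd].
  exists d; split. apply cond_pos. intros s t Hs Ht Hst.
  specialize (Hd s t Hs Ht Hst). simpl in Hd. rewrite !clamp_id in Hd; auto.
Qed.

Lemma lub_spec (S : R -> Prop) : (exists y, S y) -> (exists B, forall y, S y -> y <= B) -> is_lub S (lub_of S).
Proof.
  intros Hn Hb. unfold lub_of. apply epsilon_spec.
  destruct (completeness S) as [m Hm]. destruct Hb as [B HB]. exists B. exact HB. exact Hn.
  exists m; exact Hm.
Qed.

Lemma lub_le (S : R -> Prop) B : (exists y, S y) -> (forall y, S y -> y <= B) -> lub_of S <= B.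
Proof.
  intros Hn Hb. destruct (lub_spec S Hn (ex_intro _ B Hb)) as [_ H]. apply H. exact Hb.
Qed.

Lemma le_lub (S : R -> Prop) y B : (forall y, S y -> y <= B) -> S y -> y <= lub_of S.
Proof.
  intros Hb Hy. destruct (lub_spec S (ex_intro _ y Hy) (ex_intro _ B Hb)) as [H _]. apply H. exact Hy.
Qed.

Lemma nonincr f f' lo hi : lo < hi -> continuous_on f (fun t => lo <= t <= hi) ->
  (forall t, lo < t < hi -> derivable_pt_lim f t (f' t)) ->
  (forall t, lo < t < hi -> f' t <= 0) -> f hi <= f lo.
Proof.
  intros Hlh Hc Hd Hn.
  set (g := fun t => f (clamp lo hi t)).
  assert (Hg : forall t, lo < t < hi -> derivable_pt_lim g t (f' t)).
  { intros t Ht eps He. destruct (Hd t Ht eps He) as [d Hdd].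
    assert (Hp : 0 < Rmin d (Rmin (t - lo) (hi - t))).
    { apply Rmin_pos. apply cond_pos. apply Rmin_pos; lra. }
    exists (mkposreal _ Hp). intros e He0 Hel. simpl in Hel.
    assert (Hel1 : Rabs e < d) by (eapply Rlt_le_trans; [exact Hel| apply Rmin_l]).
    assert (Hel2 : Rabs e < Rmin (t - lo) (hi - t)) by (eapply Rlt_le_trans; [exact Hel| apply Rmin_r]).
    assert (Hm1 := Rmin_l (t-lo) (hi-t)). assert (Hm2 := Rmin_r (t-lo) (hi-t)).
    unfold g. rewrite !clamp_id. apply Hdd; auto.
    lra. revert Hel2; unfold Rabs; destruct Rcase_abs; lra. }
  assert (pr1 : forall c, lo < c < hi -> derivable_pt g c).
  { intros c Hc'. exists (f' c). apply Hg; auto. }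
  destruct (MVT g id lo hi pr1 (fun c _ => derivable_pt_id c) Hlh
     (fun c _ => clamp_cont f lo hi (Rlt_le _ _ Hlh) Hc c)
     (fun c _ => derivable_continuous_pt _ _ (derivable_pt_id c))) as [c [P HP]].
  rewrite derive_pt_id in HP. rewrite (derive_pt_eq_0 _ _ _ _ (Hg c P)) in HP.
  unfold g, id in HP. rewrite !clamp_id in HP by lra.
  specialize (Hn c P). nra.
Qed.
Lemma ext_cont (f : R -> R) lo : continuous_on f (fun t => lo <= t) ->
  forall c, continuity_pt (fun t => f (Rmax lo t)) c.
Proof.
  intros H c. unfold continuity_pt, continue_in, limit1_in, limit_in.
  intros eps He. destruct (H (Rmax lo c) (Rmax_l _ _) eps He) as [d [Hd H']].
  exists d; split; auto. intros s [_ Hs]. simpl in *. unfold R_dist in *.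
  apply H'. apply Rmax_l.
  eapply Rle_lt_trans; [|exact Hs]. unfold Rmax; repeat destruct Rle_dec;
  unfold Rabs; repeat destruct Rcase_abs; lra.
Qed.

Section A.
Variable a : R -> R.
Hypothesis Hac : continuous_on a (fun t => 0 <= t).
Hypothesis Hap : forall t, 0 <= t -> 0 <= a t.
Definition at_ := fun t => a (Rmax 0 t).
Definition AA := fun t => RInt at_ 0 t.

Lemma at_cont c : continuous at_ c.
Proof. apply continuity_pt_filterlim. apply ext_cont; auto. Qed.

Lemma ex_at u v : ex_RInt at_ u v.
Proof. apply (ex_RInt_continuous (V:=R_CompleteNormedModule)). intros; apply at_cont. Qed.

Lemma AA_deriv t : derivable_pt_lim AA t (at_ t).
Proof.
  apply is_derive_Reals. apply (is_derive_RInt (V:=R_NormedModule) at_ AA 0 t). 2: apply at_cont.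
  apply filter_forall. intros b. unfold AA. apply (RInt_correct (V:=R_CompleteNormedModule)). apply ex_at.
Qed.

Lemma at_nonneg t : 0 <= at_ t.
Proof. unfold at_. apply Hap. apply Rmax_l. Qed.

Lemma AA_mono u v : u <= v -> AA u <= AA v.
Proof.
  intros H. unfold AA. rewrite <- (RInt_Chasles at_ 0 u v) by apply ex_at.
  assert (0 <= RInt at_ u v). apply RInt_ge_0; auto. apply ex_at. intros; apply at_nonneg.
  unfold plus; simpl. lra.
Qed.

Lemma AA0 : AA 0 = 0.
Proof. unfold AA. rewrite RInt_point. reflexivity. Qed.

Lemma integral_AA T : 0 <= T -> integral a 0 T = AA T.
Proof.
  intros HT.
  assert (Hext : forall x, Rmin 0 T < x < Rmax 0 T -> at_ x = a x).
  { intros x Hx. rewrite Rmin_left, Rmax_right in Hx by lra. unfold at_. rewrite Rmax_right; lra. }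
  assert (He : ex_RInt a 0 T) by (eapply ex_RInt_ext; [exact Hext| apply ex_at]).
  assert (pr := ex_RInt_Reals_0 _ _ _ He).
  unfold integral. 
  destruct (epsilon_spec (inhabits 0) (fun I => exists pr : Riemann_integrable a 0 T, RiemannInt pr = I)) as [pr' Hpr'].
  { exists (RiemannInt pr); exists pr; reflexivity. }
  rewrite <- Hpr'. rewrite <- RInt_Reals. unfold AA. symmetry. apply RInt_ext. auto.
Qed.
End A.

Section Main.
Variables (q : R) (a r phi x z : R -> R) (k : nat) (T : R).
Hypothesis Hq : 0 < q.
Hypothesis Hac : continuous_on a (fun t => 0 <= t).
Hypothesis Hap : forall t, 0 <= t -> 0 <= a t.
Hypothesis Hrc : continuous_on r (fun t => 0 <= t).
Hypothesis Hrb : forall t, 0 <= t -> 0 <= r t <= q.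
Hypothesis Hx : is_solution_x q a r phi x.
Hypothesis Hz : is_solution_z q a r phi k z.
Hypothesis Hk : (1 <= k)%nat.
Hypothesis HT : 0 < T.

Let h := q / INR k.

Lemma INRk_pos : 0 < INR k.
Proof. apply lt_0_INR; lia. Qed.

Lemma h_pos : 0 < h.
Proof. unfold h. apply Rdiv_lt_0_compat; auto. apply INRk_pos. Qed.

Lemma kh : INR k * h = q.
Proof. unfold h. field. apply Rgt_not_eq, INRk_pos. Qed.

Lemma x_bnd : exists M, forall t, -q <= t <= T -> Rabs (x t) <= M.
Proof.
  apply bounded_on. lra. destruct Hx as [_ [H _]]. eapply cont_on_sub; [exact H|]. simpl; intros; lra.
Qed.

Definition Mr := modulus r 0 T h.
Definition W := modulus x (- q) T (Mr + 2 * h).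

Lemma Mr_spec t1 t2 : 0 <= t1 <= T -> 0 <= t2 <= T -> Rabs (t2 - t1) <= h ->
  Rabs (r t2 - r t1) <= Mr.
Proof.
  intros H1 H2 H3. unfold Mr, modulus. eapply le_lub with (B := q).
  - intros y [s1 [s2 [A1 [A2 [_ ->]]]]].
    assert (B1 := Hrb s1 (proj1 A1)). assert (B2 := Hrb s2 (proj1 A2)).
    apply Rabs_le. lra.
  - exists t1, t2. repeat split; auto; lra.
Qed.

Lemma W_spec t1 t2 : -q <= t1 <= T -> -q <= t2 <= T -> Rabs (t2 - t1) <= Mr + 2 * h ->
  Rabs (x t2 - x t1) <= W.
Proof.
  intros H1 H2 H3. destruct x_bnd as [M HM]. unfold W, modulus. eapply le_lub with (B := 2 * M).
  - intros y [s1 [s2 [A1 [A2 [_ ->]]]]].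
    assert (B1 := HM s1 A1). assert (B2 := HM s2 A2).
    eapply Rle_trans. apply Rabs_triang. rewrite Rabs_Ropp. lra.
  - exists t1, t2. repeat split; auto; lra.
Qed.

Lemma W_nonneg : 0 <= W.
Proof.
  assert (H := W_spec T T). rewrite !Rminus_eq_0, !Rabs_R0 in H. apply H; try lra.
  assert (0 <= Mr). { assert (H' := Mr_spec T T). rewrite !Rminus_eq_0, !Rabs_R0 in H'. apply H'; try lra. apply Rlt_le, h_pos. }
  assert (Hh := h_pos). lra.
Qed.

Definition G t := W * (exp (AA a t) - 1).

Lemma G0 : G 0 = 0.
Proof. unfold G. rewrite AA0, exp_0. ring. Qed.

Lemma G_mono u v : u <= v -> G u <= G v.
Proof.
  intros H. unfold G. apply Rmult_le_compat_l. apply W_nonneg.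
  assert (exp (AA a u) <= exp (AA a v)). destruct (Rle_lt_or_eq_dec _ _ (AA_mono a Hac Hap u v H)) as [Hl|He]. apply Rlt_le, exp_increasing; auto. rewrite He; lra. lra.
Qed.

Lemma G_deriv t : derivable_pt_lim G t (W * (exp (AA a t) * at_ a t)).
Proof.
  unfold G.
  apply (derivable_pt_lim_scal (fun s => exp (AA a s) - 1) W t).
  replace (exp (AA a t) * at_ a t) with (exp (AA a t) * at_ a t - 0) by ring.
  apply (derivable_pt_lim_minus (fun s => exp (AA a s)) (fun _ => 1)).
  2: apply derivable_pt_lim_const.
  apply (derivable_pt_lim_comp (AA a) exp). apply AA_deriv; auto. apply derivable_pt_lim_exp.
Qed.

Lemma G_cont : continuous_on G (fun t => 0 <= t).
Proof.
  apply cont_pt_on. intros c. apply derivable_continuous_pt. exists (W * (exp (AA a c) * at_ a c)).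
  apply G_deriv.
Qed.

Definition e t := x t - z t.

Lemma e_cont : continuous_on e (fun t => 0 <= t).
Proof.
  destruct Hx as [_ [Hx2 _]]. destruct Hz as [_ [Hz2 _]].
  apply cont_on_minus; auto. eapply cont_on_sub; [exact Hx2|]. simpl; intros; lra.
Qed.

Lemma e_grid n : (n <= k)%nat -> e (- INR n * h) = 0.
Proof.
  intros Hn. destruct Hx as [Hx1 _]. destruct Hz as [Hz1 _]. unfold e.
  rewrite Hz1 by auto. rewrite Hx1. unfold h; ring.
  assert (INR n <= INR k) by (apply le_INR; auto). assert (0 <= INR n) by apply pos_INR.
  assert (Hh := h_pos). assert (Hkh := kh). split; nra.
Qed.

Definition Q j := forall t, INR j * h <= t <= (INR j + 1) * h -> t <= T -> Rabs (e t) <= G t.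

Lemma step i : (forall j, (j < i)%nat -> Q j) -> Q i.
Proof.
  intros IH t [Ht1 Ht2] HtT.
  assert (Hh := h_pos). assert (Hi0 : 0 <= INR i) by apply pos_INR.
  assert (Hih : Rabs (e (INR i * h)) <= G (INR i * h)).
  { destruct i as [|i'].
    - replace (INR 0 * h) with (- INR 0 * h) by (simpl; ring).
      rewrite e_grid by lia. replace (- INR 0 * h) with 0 by (simpl; ring).
      rewrite G0, Rabs_R0; lra.
    - apply (IH i'). lia. rewrite S_INR. lra. lra. }
  set (m := Int_part (r (INR i * h) / h)).
  assert (Hm := base_Int_part (r (INR i * h) / h)). fold m in Hm.
  assert (Hr := Hrb (INR i * h) ltac:(nra)).
  assert (Hrh : r (INR i * h) / h <= INR k).
  { replace (INR k) with (q / h) by (unfold h; field; split; [apply Rgt_not_eq, INRk_pos | lra]).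
    unfold Rdiv. apply Rmult_le_compat_r. apply Rlt_le, Rinv_0_lt_compat; lra. lra. }
  assert (Hrh0 : 0 <= r (INR i * h) / h) by (apply Rdiv_le_0_compat; lra).
  assert (Hm0 : (0 <= m)%Z). { assert (-1 < m)%Z by (apply lt_IZR; simpl; lra). lia. }
  assert (Hmk : (m <= Z.of_nat k)%Z). { apply le_IZR. rewrite <- INR_IZR_INZ. lra. }
  assert (Hkid : kidx r h i = IZR m) by reflexivity.
  set (pi := (INR i - kidx r h i) * h).
  assert (Hpi : Rabs (e pi) <= G (INR i * h)).
  { destruct (Z_le_gt_dec m (Z.of_nat i)) as [Hle|Hgt].
    - set (j := Z.to_nat (Z.of_nat i - m)).
      assert (HjR : INR j = INR i - IZR m).
      { unfold j. rewrite INR_IZR_INZ, Z2Nat.id by lia. rewrite minus_IZR, <- INR_IZR_INZ. ring. }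
      assert (Hpij : pi = INR j * h) by (unfold pi; rewrite Hkid, HjR; ring).
      rewrite Hpij. destruct (Nat.eq_dec j i) as [->|Hne]. auto.
      assert (Hji : (j < i)%nat) by (unfold j; lia).
      assert (INR j <= INR i) by (apply le_INR; lia).
      assert (0 <= IZR m) by (apply IZR_le; lia).
      eapply Rle_trans. apply (IH j Hji). split. lra. lra. nra.
      apply G_mono. nra.
    - set (n := Z.to_nat (m - Z.of_nat i)).
      assert (HnR : INR n = IZR m - INR i).
      { unfold n. rewrite INR_IZR_INZ, Z2Nat.id by lia. rewrite minus_IZR, <- INR_IZR_INZ. ring. }
      assert (Hpin : pi = - INR n * h) by (unfold pi; rewrite Hkid, HnR; ring).
      rewrite Hpin, e_grid by (unfold n; lia). rewrite Rabs_R0.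
      rewrite <- G0. apply G_mono. nra. }
  destruct (Req_dec t (INR i * h)) as [->|Hne]. auto.
  assert (Htlt : INR i * h < t) by lra.
  destruct Hx as [_ [_ [Hx3 _]]]. destruct Hz as [_ [_ [Hz3 _]]].
  cbv zeta in Hz3. fold h in Hz3.
  assert (Hder : forall s, INR i * h < s < t ->
     derivable_pt_lim e s (- a s * x (s - r s) - - a s * z pi)).
  { intros s Hs. unfold e. apply (derivable_pt_lim_minus x z).
    apply Hx3. nra. apply Hz3. lra. }
  assert (Hbound : forall s, INR i * h < s < t ->
     Rabs (- a s * x (s - r s) - - a s * z pi) <= W * (exp (AA a s) * at_ a s)).
  { intros s Hs.
    assert (Hs0 : 0 <= s) by nra.
    assert (Has : at_ a s = a s) by (unfold at_; rewrite Rmax_right; lra).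
    assert (Ha := Hap s Hs0). assert (Hrs := Hrb s Hs0).
    assert (Hm2 : IZR m * h <= r (INR i * h) < IZR m * h + h).
    { destruct Hm as [Hm1 Hm2]. split.
      - apply Rmult_le_reg_r with (/h). apply Rinv_0_lt_compat; lra.
        rewrite Rmult_assoc, Rinv_r by lra. lra.
      - apply Rmult_lt_reg_r with (/h). apply Rinv_0_lt_compat; lra.
        rewrite Rmult_plus_distr_r, Rmult_assoc, Rinv_r by lra.
        unfold Rdiv in Hm2. lra. }
    assert (HMr : Rabs (r s - r (INR i * h)) <= Mr).
    { apply Mr_spec; try split; try lra. nra. rewrite Rabs_right; lra. }
    assert (Hpi_le : pi = INR i * h - IZR m * h) by (unfold pi; rewrite Hkid; ring).
    assert (HmZ : IZR m <= INR k) by (rewrite INR_IZR_INZ; apply IZR_le; lia).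
    assert (Hkh := kh).
    assert (HW : Rabs (x (s - r s) - x pi) <= W).
    assert (Hmq : IZR m * h <= q) by (rewrite <- Hkh; apply Rmult_le_compat_r; lra).
    assert (Hm0' : 0 <= IZR m * h) by (apply Rmult_le_pos; [apply IZR_le; lia | lra]).
    assert (Hih0 : 0 <= INR i * h) by nra.
    { apply W_spec. split; lra. split; nra.
      apply Rabs_le_between in HMr. apply Rabs_le. split; nra. }
    assert (Hepi : Rabs (x pi - z pi) <= G s).
    { eapply Rle_trans. exact Hpi. apply G_mono. lra. }
    assert (HG : W * exp (AA a s) = W + G s) by (unfold G; ring).
    rewrite Has, <- Rmult_assoc, HG.
    replace (- a s * x (s - r s) - - a s * z pi) with (- a s * (x (s - r s) - x pi) - a s * (x pi - z pi)) by ring.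
    apply Rabs_le_between in HW. apply Rabs_le_between in Hepi.
    apply Rabs_le. split; nra. }
  assert (Hc1 : continuous_on (fun s => e s - G s) (fun s => INR i * h <= s <= t)).
  { eapply cont_on_sub. apply cont_on_minus. apply e_cont. apply G_cont. simpl; intros; nra. }
  assert (Hc2 : continuous_on (fun s => - e s - G s) (fun s => INR i * h <= s <= t)).
  { eapply cont_on_sub. apply cont_on_minus. apply cont_on_opp, e_cont. apply G_cont. simpl; intros; nra. }
  assert (N1 := nonincr (fun s => e s - G s)
      (fun s => (- a s * x (s - r s) - - a s * z pi) - W * (exp (AA a s) * at_ a s))
      _ _ Htlt Hc1).
  assert (N2 := nonincr (fun s => - e s - G s)
      (fun s => - (- a s * x (s - r s) - - a s * z pi) - W * (exp (AA a s) * at_ a s))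
      _ _ Htlt Hc2).
  assert (A1 : e t - G t <= e (INR i * h) - G (INR i * h)).
  { apply N1. intros s Hs. apply (derivable_pt_lim_minus e G). apply Hder; auto. apply G_deriv.
    intros s Hs. specialize (Hbound s Hs). apply Rabs_le_between in Hbound. lra. }
  assert (A2 : - e t - G t <= - e (INR i * h) - G (INR i * h)).
  { apply N2. intros s Hs. apply (derivable_pt_lim_minus (fun s => - e s) G).
    apply (derivable_pt_lim_opp e). apply Hder; auto. apply G_deriv.
    intros s Hs. specialize (Hbound s Hs). apply Rabs_le_between in Hbound. lra. }
  apply Rabs_le_between in Hih. apply Rabs_le. lra.
Qed.


Lemma all_Q i : Q i.
Proof.
  assert (H : forall n j, (j <= n)%nat -> Q j).
  { induction n. intros j Hj. apply step. intros; lia.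
    intros j Hj. destruct (Nat.eq_dec j (S n)). subst. apply step. intros; apply IHn; lia.
    apply IHn; lia. }
  apply (H i). lia.
Qed.

Lemma e_bound t : 0 <= t <= T -> Rabs (e t) <= G t.
Proof.
  intros Ht. assert (Hh := h_pos).
  set (m := Int_part (t / h)). assert (Hm := base_Int_part (t / h)). fold m in Hm.
  assert (Hth : 0 <= t / h) by (apply Rdiv_le_0_compat; lra).
  assert (Hm0 : (0 <= m)%Z). { assert (-1 < m)%Z by (apply lt_IZR; simpl; lra). lia. }
  apply (all_Q (Z.to_nat m)); [|lra].
  rewrite INR_IZR_INZ, Z2Nat.id by lia.
  destruct Hm as [Hm1 Hm2]. split.
  - apply Rmult_le_reg_r with (/h). apply Rinv_0_lt_compat; lra.
    rewrite Rmult_assoc, Rinv_r by lra. unfold Rdiv in Hm1. lra.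
  - apply Rmult_le_reg_r with (/h). apply Rinv_0_lt_compat; lra.
    rewrite Rmult_assoc, Rinv_r by lra. unfold Rdiv in Hm2. lra.
Qed.

Lemma Mr_nonneg : 0 <= Mr.
Proof.
  assert (H' := Mr_spec T T). rewrite !Rminus_eq_0, !Rabs_R0 in H'. apply H'; try lra. apply Rlt_le, h_pos.
Qed.

Lemma part1 : sup_on (fun t => Rabs (x t - z t)) 0 T <= exp (integral a 0 T) * integral a 0 T * W.
Proof.
  rewrite integral_AA by (auto; lra).
  set (I := AA a T).
  assert (HI : 0 <= I) by (unfold I; rewrite <- (AA0 a); apply AA_mono; auto; lra).
  assert (Hexp : exp I - 1 <= I * exp I).
  { assert (H1 := exp_ineq1_le (- I)).
    assert (H2 : exp (- I) * exp I = 1) by (rewrite <- exp_plus; replace (-I + I) with 0 by ring; apply exp_0).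
    assert (H3 := exp_pos I). nra. }
  assert (HGT : G T <= exp I * I * W).
  { unfold G. fold I. assert (HW := W_nonneg). nra. }
  unfold sup_on. apply lub_le.
  - exists (Rabs (x 0 - z 0)). exists 0. split; [lra|reflexivity].
  - intros y [t [Ht ->]]. eapply Rle_trans. apply (e_bound t Ht).
    eapply Rle_trans. apply G_mono. apply Ht. exact HGT.
Qed.

Lemma sup_nonneg : 0 <= sup_on (fun t => Rabs (x t - z t)) 0 T.
Proof.
  unfold sup_on. apply Rle_trans with (Rabs (x 0 - z 0)). apply Rabs_pos.
  apply le_lub with (B := G T). 2: exists 0; split; [lra|reflexivity].
  intros y [t [Ht ->]]. eapply Rle_trans. apply (e_bound t Ht). apply G_mono. apply Ht.
Qed.

End Main.

Lemma modulus_le f lo T d B : lo <= T -> 0 <= d ->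
  (forall t1 t2, lo <= t1 <= T -> lo <= t2 <= T -> Rabs (t2 - t1) <= d -> Rabs (f t2 - f t1) <= B) ->
  modulus f lo T d <= B.
Proof.
  intros H1 H2 H. unfold modulus. apply lub_le.
  - exists (Rabs (f lo - f lo)). exists lo, lo. repeat split; try lra. rewrite Rminus_eq_0, Rabs_R0; lra.
  - intros y [t1 [t2 [A1 [A2 [A3 ->]]]]]. apply H; auto.
Qed.

Lemma big_N q d : 0 < q -> 0 < d -> exists N, (1 <= N)%nat /\ forall k, (N <= k)%nat -> q / INR k < d.
Proof.
  intros Hq Hd. destruct (archimed (q / d)) as [A1 _].
  assert (Hqd : 0 < q / d) by (apply Rdiv_lt_0_compat; auto).
  assert (Hu : (0 <= up (q / d))%Z). { assert (0 < up (q/d))%Z by (apply lt_IZR; simpl; lra). lia. }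
  exists (S (Z.to_nat (up (q / d)))). split. lia.
  intros k Hk. assert (Hk' : INR (S (Z.to_nat (up (q / d)))) <= INR k) by (apply le_INR; auto).
  rewrite S_INR, INR_IZR_INZ, Z2Nat.id in Hk' by lia.
  assert (Hkp : 0 < INR k) by lra.
  apply Rmult_lt_reg_r with (INR k); auto. unfold Rdiv. rewrite Rmult_assoc, Rinv_l by lra.
  rewrite Rmult_1_r.
  assert (q / d < INR k) by lra.
  apply Rmult_lt_reg_r with (/ d). apply Rinv_0_lt_compat; auto.
  replace (d * INR k * / d) with (INR k) by (field; lra). exact H.
Qed.


Theorem theorem3p2 :
  forall (q : R) (a r phi : R -> R),
    0 < q ->
    continuous_on a (fun t => 0 <= t) -> (forall t, 0 <= t -> 0 <= a t) ->
    continuous_on r (fun t => 0 <= t) -> (forall t, 0 <= t -> 0 <= r t <= q) ->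
    continuous_on phi (fun t => -q <= t <= 0) ->
    forall x : R -> R, is_solution_x q a r phi x ->
    forall z : nat -> R -> R,
      (forall k : nat, (1 <= k)%nat -> is_solution_z q a r phi k (z k)) ->
      (forall (T : R) (k : nat), 0 < T -> (1 <= k)%nat ->
         sup_on (fun t => Rabs (x t - z k t)) 0 T <=
         exp (integral a 0 T) * integral a 0 T *
         modulus x (- q) T (modulus r 0 T (q / INR k) + 2 * (q / INR k))) /\
      (forall T : R, 0 < T ->
         Un_cv (fun k => sup_on (fun t => Rabs (x t - z k t)) 0 T) 0).
Proof.
  intros q a r phi Hq Hac Hap Hrc Hrb Hphi x Hx z Hz.
  assert (P1 : forall (T : R) (k : nat), 0 < T -> (1 <= k)%nat ->
         sup_on (fun t => Rabs (x t - z k t)) 0 T <=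
         exp (integral a 0 T) * integral a 0 T *
         modulus x (- q) T (modulus r 0 T (q / INR k) + 2 * (q / INR k))).
  { intros T k HT Hk. exact (part1 q a r phi x (z k) k T Hq Hac Hap Hrb Hx (Hz k Hk) Hk HT). }
  split; [exact P1|].
  intros T HT eps Heps.
  set (C := exp (integral a 0 T) * integral a 0 T).
  assert (HC : 0 <= C).
  { unfold C. rewrite integral_AA by (auto; lra).
    assert (0 <= AA a T) by (rewrite <- (AA0 a); apply AA_mono; auto; lra).
    assert (H2 := exp_pos (AA a T)). nra. }
  set (eps' := eps / (C + 1)).
  assert (He' : 0 < eps') by (unfold eps'; apply Rdiv_lt_0_compat; lra).
  destruct Hx as [Hx1 [Hx2 Hx3]].
  destruct (unif_on x (- q) T ltac:(lra) ltac:(eapply cont_on_sub; [exact Hx2|]; simpl; intros; lra) eps' He')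
    as [dx [Hdx Hux]].
  destruct (unif_on r 0 T ltac:(lra) ltac:(eapply cont_on_sub; [exact Hrc|]; simpl; intros; lra) (dx/4) ltac:(lra))
    as [dr [Hdr Hur]].
  destruct (big_N q (Rmin dr (dx/4)) Hq ltac:(apply Rmin_pos; lra)) as [N [HN1 HN]].
  exists N. intros k Hk. unfold Rdist.
  assert (Hk1 : (1 <= k)%nat) by lia.
  specialize (HN k Hk).
  assert (Hm1 := Rmin_l dr (dx/4)). assert (Hm2 := Rmin_r dr (dx/4)).
  assert (Hh : 0 < q / INR k) by (apply Rdiv_lt_0_compat; auto; apply lt_0_INR; lia).
  assert (HMr0 := Mr_nonneg q r k T Hq Hrb Hk1 HT). unfold Mr in HMr0.
  assert (HMr : modulus r 0 T (q / INR k) <= dx / 4).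
  { apply modulus_le; try lra. intros t1 t2 A1 A2 A3. left. apply Hur; auto. lra. }
  assert (HW : modulus x (- q) T (modulus r 0 T (q / INR k) + 2 * (q / INR k)) <= eps').
  { apply modulus_le; try lra. intros t1 t2 A1 A2 A3. left. apply Hux; auto. lra. }
  assert (Hs := P1 T k HT Hk1). fold C in Hs.
  assert (Hs0 : 0 <= sup_on (fun t => Rabs (x t - z k t)) 0 T).
  { exact (sup_nonneg q a r phi x (z k) k T Hq Hac Hap Hrb (conj Hx1 (conj Hx2 Hx3)) (Hz k Hk1) Hk1 HT). }
  rewrite Rminus_0_r, Rabs_right by lra.
  assert (C * eps' < eps).
  { unfold eps'. apply Rmult_lt_reg_r with (C + 1). lra.
    replace (C * (eps / (C + 1)) * (C + 1)) with (C * eps) by (field; lra). nra. }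
  nra.
Qed.
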